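(* Let $U=(U_{i,j})$ and $V=(V_{j,k})$ be unitaries on qubits $q_1,\dots,q_n$ (indices in $\{0,1\}^n$). Introduce two copies $q'_1,\dots,q'_n$ and $q''_1,\dots,q''_n$ of the qubit variables, and let $\mu(U)=\sum_{i,j\in\{0,1\}^n}U_{i,j}\,q^{i}q'^{j}$ (an expression over $q_1,\dots,q_n,q'_1,\dots,q'_n$) and $\mu(V)=\sum_{j,k\in\{0,1\}^n}V_{j,k}\,q'^{j}q''^{k}$ (an expression over $q'_1,\dots,q'_n,q''_1,\dots,q''_n$). Then $$\exists q'_1,\dots,q'_n:\ \mu(U)\cdot\mu(V)\ \equiv\ \sum_{i,k\in\{0,1\}^n}(UV)_{i,k}\,q^{i}q''^{k},$$ i.e. the left-hand side is the representation of the matrix product $UV$ over $q_1,\dots,q_n,q''_1,\dots,q''_n$.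
   Context: Qubit variables are treated as Boolean variables. Write $q^0=\overline{q}$, $q^1=q$, and for $i\in\{0,1\}^n$, $q^i=q_1^{i_1}\cdots q_n^{i_n}$ (similarly $q'^j$, $q''^k$). A complex-valued Boolean expression is a formal sum $\sum_r c_rf_r$ with $c_r\in\mathbb{C}$ and $f_r$ classical Boolean expressions, defining the function $F(f)(b)=\sum_{r:f_r(b)=1}c_r$. Product: $(\sum_rc_rf_r)\cdot(\sum_sd_sg_s)=\sum_{r,s}(c_rd_s)(f_r\wedge g_s)$. Existential quantification: $\exists x:\sum_rc_rf_r=\sum_rc_r(\exists x:f_r)$, where for a Boolean expression $h$, $\exists x:h=h_{x=0}\vee h_{x=1}$; several variables are quantified one after another. Two expressions are equivalent ($\equiv$) if they define the same function. *)

(* Defs.v *)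
From HB Require Import structures.
From mathcomp Require Import all_boot all_order all_algebra.
Set Implicit Arguments. Unset Strict Implicit. Unset Printing Implicit Defensive.
Import Order.TTheory GRing.Theory Num.Theory.
Local Open Scope ring_scope.

Definition bits (n : nat) := {ffun 'I_n -> bool}.

(* Qubit variables: copy c (0 = q, 1 = q', 2 = q'') of qubit l. *)
Definition qvar (n : nat) := ('I_3 * 'I_n)%type.
Definition assignment (n : nat) := qvar n -> bool.

(* A classical Boolean expression, represented by its semantics. *)
Definition bexpr (n : nat) := assignment n -> bool.

(* Complex-valued Boolean expression: formal sum sum_r c_r f_r. *)
Definition cbexpr (C : Type) (n : nat) := seq (C * bexpr n).

Definition cbeval (C : numClosedFieldType) n (f : cbexpr C n) (b : assignment n) : C :=
  \sum_(r <- f | r.2 b) r.1.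

Definition cbmul (C : numClosedFieldType) n (f g : cbexpr C n) : cbexpr C n :=
  [seq (r.1 * s.1, fun b => r.2 b && s.2 b) | r <- f, s <- g].

Definition assign_upd n (b : assignment n) (x : qvar n) (v : bool) : assignment n :=
  fun y => if y == x then v else b y.

Definition bexists n (x : qvar n) (h : bexpr n) : bexpr n :=
  fun b => h (assign_upd b x false) || h (assign_upd b x true).

Definition cbexists (C : numClosedFieldType) n (x : qvar n) (f : cbexpr C n) : cbexpr C n :=
  [seq (r.1, bexists x r.2) | r <- f].

Definition cbexists_seq (C : numClosedFieldType) n (xs : seq (qvar n)) (f : cbexpr C n)
  : cbexpr C n := foldl (fun g x => cbexists x g) f xs.

Definition cbequiv (C : numClosedFieldType) n (f g : cbexpr C n) : Prop :=
  forall b, cbeval f b = cbeval g b.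

Definition cq : 'I_3 := @Ordinal 3 0 isT.
Definition cq' : 'I_3 := @Ordinal 3 1 isT.
Definition cq'' : 'I_3 := @Ordinal 3 2 isT.

Definition mono n (c : 'I_3) (i : bits n) : bexpr n :=
  fun b => [forall l : 'I_n, b (c, l) == i l].

(* matrices on n qubits are indexed by bits n via enum_rank *)
Definition qmat (C : Type) n := 'M[C]_#|{: bits n}|.

Definition unitary (C : numClosedFieldType) n (U : qmat C n) : Prop :=
  U *m map_mx Num.conj U^T = 1%:M.

Definition mu (C : numClosedFieldType) n (c1 c2 : 'I_3) (M : qmat C n) : cbexpr C n :=
  [seq (M (enum_rank i) (enum_rank j), fun b => mono c1 i b && mono c2 j b)
  | i <- enum {: bits n}, j <- enum {: bits n}].

Definition primed_vars n : seq (qvar n) := [seq (cq', l) | l <- enum 'I_n].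

(* Main.v *)
Require Import Defs.
From mathcomp Require Import all_boot all_order all_algebra.
Set Implicit Arguments. Unset Strict Implicit.
Import GRing.Theory.
Local Open Scope ring_scope.

Definition bfold n (xs : seq (qvar n)) (h : bexpr n) : bexpr n :=
  foldl (fun h x => bexists x h) h xs.

Lemma cbexists_seq_map (C : numClosedFieldType) n xs (f : cbexpr C n) :
  cbexists_seq xs f = [seq (r.1, bfold xs r.2) | r <- f].
Proof.
elim: xs f => [|x xs IH] f /=.
  by elim: f => //= [[a h] f] <-.
by rewrite /cbexists_seq /= -/(cbexists_seq _ _) IH -map_comp.
Qed.

Definition G n (i k j j' : bits n) (s : seq 'I_n) : bexpr n := fun b =>
  [&& mono cq i b, mono cq'' k b, j == j' &
      [forall l, (l \in s) || (b (cq', l) == j l)]].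

Lemma mono_upd n c (i : bits n) b x v : c != cq' ->
  mono c i (assign_upd b (cq', x) v) = mono c i b.
Proof.
move=> H; apply: eq_forallb => l.
by rewrite /assign_upd xpair_eqE (negbTE H).
Qed.

Lemma G_step n (i k j j' : bits n) s x b :
  bexists (cq', x) (G i k j j' s) b = G i k j j' (x :: s) b.
Proof.
rewrite /bexists /G !mono_upd //.
case: (mono cq i b); case: (mono cq'' k b); case: (j == j'); rewrite ?andbF //=.
apply/idP/idP.
  case/orP=> /forallP H; apply/forallP => l; rewrite in_cons;
  (case: (eqVneq l x) => [->|ne] //=; have := H l;
   by rewrite /assign_upd xpair_eqE eqxx /= (negbTE ne)).
move/forallP=> H; apply/orP.
case Hv: (j x); [right|left]; apply/forallP => l; have := H l;
rewrite /assign_upd xpair_eqE eqxx /= in_cons;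
(case: (eqVneq l x) => [->|ne] /=; [by rewrite Hv eqxx orbT | by []]).
Qed.

Lemma G_mem n (i k j j' : bits n) s1 s2 b : s1 =i s2 ->
  G i k j j' s1 b = G i k j j' s2 b.
Proof.
move=> E; rewrite /G; congr [&& _, _, _ & _]; apply: eq_forallb => l.
by rewrite E.
Qed.

Lemma bfold_G n (i k j j' : bits n) (s s0 : seq 'I_n) (h : bexpr n) :
  (forall b, h b = G i k j j' s0 b) ->
  forall b, bfold [seq (cq', l) | l <- s] h b = G i k j j' (s ++ s0) b.
Proof.
elim: s s0 h => [|x s IH] s0 h Hh b /=; first exact: Hh.
rewrite /bfold /= -/(bfold _ _) (IH (x :: s0)).
  by apply: G_mem => y; rewrite !(mem_cat, in_cons) orbCA.
by move=> b'; rewrite -G_step /bexists !Hh.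
Qed.

Lemma start n (i k j j' : bits n) b :
  (mono cq i b && mono cq' j b) && (mono cq' j' b && mono cq'' k b) =
  G i k j j' [::] b.
Proof.
rewrite /G; case: (eqVneq j j') => [<-|ne].
  have -> : [forall l, (l \in [::]) || (b (cq', l) == j l)] = mono cq' j b.
    by apply: eq_forallb => l; rewrite in_nil.
  by case: (mono cq i b); case: (mono cq'' k b); case: (mono cq' j b).
rewrite !andbF.
apply/negbTE/negP => /andP[/andP[_ /forallP H1] /andP[/forallP H2 _]].
by move/eqP: ne; apply; apply/ffunP => l; rewrite -(eqP (H1 l)) (eqP (H2 l)).
Qed.

Lemma final n (i k j j' : bits n) h b :
  (forall b, h b = G i k j j' [::] b) ->
  bfold (primed_vars n) h b = [&& mono cq i b, mono cq'' k b & j == j'].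
Proof.
move=> Hh; rewrite /primed_vars (bfold_G _ Hh) /G cats0.
congr [&& _, _ & _]; case: (j == j') => //=.
by apply/forallP => l; rewrite mem_enum.
Qed.

Lemma sum_rank (C : numClosedFieldType) (T : finType) (F : 'I_#|T| -> C) :
  \sum_(j0 < #|T|) F j0 = \sum_(j <- enum T) F (enum_rank j).
Proof.
rewrite (reindex (@enum_rank T)) /=; last first.
  by apply: onW_bij; exact: enum_rank_bij.
by rewrite -big_enum /=.
Qed.

Theorem theorem5 (C : numClosedFieldType) (n : nat) (U V : qmat C n) :
  unitary U -> unitary V ->
  cbequiv (cbexists_seq (primed_vars n) (cbmul (mu cq cq' U) (mu cq' cq'' V)))
          (mu cq cq'' (U *m V)).
Proof.
move=> _ _ b.
rewrite /cbeval cbexists_seq_map big_map /cbmul /mu big_mkcond /=.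
rewrite big_allpairs_dep big_allpairs_dep /=.
under eq_bigr => i1 _ do under eq_bigr => i2 _ do rewrite big_allpairs_dep /=.
rewrite [RHS]big_mkcond [RHS]big_allpairs_dep /=.
under eq_bigr => i1 _ do under eq_bigr => i2 _ do under eq_bigr => j' _ do
  under eq_bigr => k _ do rewrite (final _ (start i1 k i2 j')).
apply: eq_bigr => i _.
have E : forall j : bits n,
  \sum_(j' <- enum (bits n)) \sum_(k <- enum (bits n))
     (if [&& mono cq i b, mono cq'' k b & j == j']
      then U (enum_rank i) (enum_rank j) * V (enum_rank j') (enum_rank k) else 0) =
  \sum_(k <- enum (bits n)) (if mono cq i b && mono cq'' k b
      then U (enum_rank i) (enum_rank j) * V (enum_rank j) (enum_rank k) else 0).
  move=> j; rewrite (bigD1_seq j) ?mem_enum ?enum_uniq //= [X in _ + X]big1_seq ?addr0.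
    by apply: eq_bigr => k _; rewrite eqxx andbT.
  move=> j' /andP[ne _]; apply: big1 => k _.
  by rewrite eq_sym (negbTE ne) !andbF.
under eq_bigr => j _ do rewrite E.
rewrite exchange_big /=; apply: eq_bigr => k _.
rewrite mxE sum_rank.
case: (mono cq i b && mono cq'' k b) => //.
by rewrite big1.
Qed.
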